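(* The affine scheme $\mathscr{H}_{\mathbb{A}}^{13}\cap\{p_{221}=p_{212}=p_{122}=1,\ p_{222}=p_{211}=p_{121}=p_{112}=0\}$ coincides with $\mathscr{S}_{\mathbb{A}}^{6}$ under the identification of coordinates $s_{11}=u_1$, $s_{12}=x_{13}$, $s_{13}=x_{12}$, $s_{22}=u_2$, $s_{23}=x_{11}$, $s_{33}=u_3$, $\sigma_1=x_{21}$, $\sigma_2=x_{22}$, $\sigma_3=x_{23}$, $t=-p_{111}$ (left-hand sides are coordinates of $\mathscr{S}_{\mathbb{A}}^6$, right-hand sides those of $\mathscr{H}_{\mathbb{A}}^{13}$).
   Context: $\mathscr{H}_{\mathbb{A}}^{13}\subset\mathbb{A}^{17}$ (coordinates $u_1,u_2,u_3$, $x_{ij}$ with $i\in\{1,2\},j\in\{1,2,3\}$, $p_{abc}$ with $a,b,c\in\{1,2\}$) is defined by $-u_1\bm{x}_1+D^{(3)}\bm{x}_2=\bm{0}$, $-u_2\bm{x}_2+D^{(1)}\bm{x}_3=\bm{0}$, $-u_3\bm{x}_3-(D^{(2)})^{\dagger}\bm{x}_1=\bm{0}$, $u_2u_3+\det D^{(1)}=0$, $u_3u_1+\det D^{(2)}=0$, $u_1u_2+\det D^{(3)}=0$, where $\bm{x}_j=(x_{1j},x_{2j})^t$, $M^\dagger$ is the adjugate, $D^{(1)}_{ij}=p_{1ij}x_{21}-p_{2ij}x_{11}$, $D^{(2)}_{ij}=p_{i1j}x_{22}-p_{i2j}x_{12}$, $D^{(3)}_{ij}=p_{ij1}x_{23}-p_{ij2}x_{13}$,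 $D^{(k)}$ has rows $(-D^{(k)}_{12},D^{(k)}_{11})$, $(-D^{(k)}_{22},D^{(k)}_{21})$. $\mathscr{S}_{\mathbb{A}}^{6}$ is the affine scheme in the $10$-dimensional affine space with coordinates $s_{11},s_{12},s_{13},s_{22},s_{23},s_{33},\sigma_1,\sigma_2,\sigma_3,t$ defined by $\mathsf{S}\bm{\sigma}=\bm{0}$ and $\mathsf{S}^{\dagger}=t\,\bm{\sigma}\,{}^t\bm{\sigma}$, where $\mathsf{S}$ is the symmetric matrix $(s_{ij})$ (with $s_{ji}=s_{ij}$), $\bm{\sigma}=(\sigma_1,\sigma_2,\sigma_3)^t$, and $\mathsf{S}^\dagger$ is the adjugate. *)

(* Defs.v *)
From HB Require Import structures.
From mathcomp Require Import all_boot all_order all_algebra.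
From mathcomp Require Import mpoly.
Set Implicit Arguments. Unset Strict Implicit. Unset Printing Implicit Defensive.
Import Order.TTheory GRing.Theory.
Local Open Scope ring_scope.

Definition in_ideal {A : comRingType} (gens : seq A) (p : A) : Prop :=
  exists cs : seq A, p = \sum_(i < size gens) cs`_i * gens`_i.

Definition same_ideal {A : comRingType} (g1 g2 : seq A) : Prop :=
  forall p, in_ideal g1 p <-> in_ideal g2 p.

Section Equations.
Variable A : comRingType.

Variables (u : nat -> A) (x : nat -> nat -> A) (p : nat -> nat -> nat -> A).

Definition xv (j : nat) : 'cV[A]_2 := \col_(i < 2) x i.+1 j.

Definition Dentry (k i j : nat) : A :=
  match k with
  | 1 => p 1 i j * x 2 1 - p 2 i j * x 1 1
  | 2 => p i 1 j * x 2 2 - p i 2 j * x 1 2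
  | _ => p i j 1 * x 2 3 - p i j 2 * x 1 3
  end.

Definition Dmat (k : nat) : 'M[A]_2 :=
  \matrix_(a < 2, b < 2) (if b == 0 :> nat then - Dentry k a.+1 2 else Dentry k a.+1 1).

Definition HE1 : 'cV[A]_2 := - u 1 *: xv 1 + Dmat 3 *m xv 2.
Definition HE2 : 'cV[A]_2 := - u 2 *: xv 2 + Dmat 1 *m xv 3.
Definition HE3 : 'cV[A]_2 := - u 3 *: xv 3 - \adj (Dmat 2) *m xv 1.

Definition H_gens : seq A :=
  [seq HE1 i ord0 | i : 'I_2] ++ [seq HE2 i ord0 | i : 'I_2] ++
  [seq HE3 i ord0 | i : 'I_2] ++
  [:: u 2 * u 3 + \det (Dmat 1); u 3 * u 1 + \det (Dmat 2);
      u 1 * u 2 + \det (Dmat 3)].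
End Equations.

Section SEquations.
Variable A : comRingType.
Variables (s : nat -> nat -> A) (sigma : nat -> A) (t : A).

(* symmetric matrix (s_ij) with s_ji = s_ij, built from the s_ij with i <= j *)
Definition Smat : 'M[A]_3 := \matrix_(i < 3, j < 3) s (minn i j).+1 (maxn i j).+1.
Definition sigv : 'cV[A]_3 := \col_(i < 3) sigma i.+1.

Definition S_gens : seq A :=
  [seq (Smat *m sigv) i ord0 | i : 'I_3] ++
  [seq (\adj Smat - t *: (sigv *m sigv^T)) ij.1 ij.2 | ij : 'I_3 * 'I_3].
End SEquations.

(* ---- coordinates on the 10-dimensional slice, named after H's coordinates:
   index 0,1,2 = u1,u2,u3 ; 3 = x11, 4 = x21, 5 = x12, 6 = x22, 7 = x13,
   8 = x23 ; 9 = p111. ---- *)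
Definition V {R : comRingType} (k : nat) : {mpoly R[10]} := 'X_(inord k).

Definition Hu {R : comRingType} (i : nat) : {mpoly R[10]} := V (i.-1).
Definition Hx {R : comRingType} (i j : nat) : {mpoly R[10]} :=
  V (3 + 2 * j.-1 + i.-1).
Definition Hp {R : comRingType} (a b c : nat) : {mpoly R[10]} :=
  match a, b, c with
  | 1, 1, 1 => V 9
  | 2, 2, 1 | 2, 1, 2 | 1, 2, 2 => 1
  | _, _, _ => 0
  end.

Definition Ss {R : comRingType} (i j : nat) : {mpoly R[10]} :=
  match i, j with
  | 1, 1 => Hu 1 | 1, 2 => Hx 1 3 | 1, 3 => Hx 1 2
  | 2, 2 => Hu 2 | 2, 3 => Hx 1 1 | 3, 3 => Hu 3
  | _, _ => 0
  end.
Definition Ssigma {R : comRingType} (i : nat) : {mpoly R[10]} := Hx 2 i.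
Definition St {R : comRingType} : {mpoly R[10]} := - Hp 1 1 1.

(* Main.v *)
Require Import Defs.
From HB Require Import structures.
From mathcomp Require Import all_boot all_order all_algebra.
From mathcomp Require Import mpoly.
From mathcomp Require Import ring.
Import GRing.Theory.
Local Open Scope ring_scope.

Section Id.
Variable A : comRingType.
Implicit Types g : seq A.

Lemma in_idealP g p : in_ideal g p <-> exists f : 'I_(size g) -> A, p = \sum_i f i * g`_i.
Proof.
split=> [[cs ->]|[f ->]]; first by exists (fun i => cs`_i).
exists (mkseq (fun i => if insub i is Some j then f j else 0) (size g)); apply: eq_bigr => i _.
by rewrite nth_mkseq // valK.
Qed.

Lemma in_ideal0 g : in_ideal g 0.
Proof. by apply/in_idealP; exists (fun _ => 0); rewrite big1 // => i _; rewrite mul0r. Qed.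

Lemma in_idealD g p q : in_ideal g p -> in_ideal g q -> in_ideal g (p + q).
Proof.
move=> /in_idealP[f ->] /in_idealP[h ->]; apply/in_idealP; exists (fun i => f i + h i).
by rewrite -big_split; apply: eq_bigr => i _; rewrite mulrDl.
Qed.

Lemma in_idealM g c p : in_ideal g p -> in_ideal g (c * p).
Proof.
move=> /in_idealP[f ->]; apply/in_idealP; exists (fun i => c * f i).
by rewrite mulr_sumr; apply: eq_bigr => i _; rewrite mulrA.
Qed.

Lemma in_ideal_mem g r : r \in g -> in_ideal g r.
Proof.
move=> rg; apply/in_idealP; exists (fun i => if (i : nat) == index r g then 1 else 0).
have ir : (index r g < size g)%N by rewrite index_mem.
rewrite (bigD1 (Ordinal ir)) //= eqxx mul1r.
rewrite big1 ?addr0 ?nth_index // => i /negbTE ne.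
have -> : ((i : nat) == index r g) = false.
  by apply/negbTE; apply: contraFN ne => /eqP e; apply/eqP/val_inj.
by rewrite mul0r.
Qed.

Lemma in_ideal_memN g r : r \in g -> in_ideal g (- r).
Proof. by move=> /in_ideal_mem/(@in_idealM g (-1)); rewrite mulN1r. Qed.

Lemma ideal_sub g1 g2 : (forall q, q \in g1 -> in_ideal g2 q) -> forall p, in_ideal g1 p -> in_ideal g2 p.
Proof.
move=> H p [cs ->]; apply: (big_ind (in_ideal g2)).
- exact: in_ideal0.
- exact: in_idealD.
- by move=> i _; apply/in_idealM/H/mem_nth.
Qed.
End Id.

Lemma mem_ideal_eq {A : comRingType} {g : seq A} {r q : A} : r \in g -> q = r \/ q = - r -> in_ideal g q.
Proof. by move=> rg [->|->]; [apply: in_ideal_mem | apply: in_ideal_memN]. Qed.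

Section Main.
Variable R : comRingType.

Notation HG := (H_gens (@Hu R) (@Hx R) (@Hp R)).
Notation SG := (S_gens (@Ss R) (@Ssigma R) (@St R)).

Lemma memSA i (hi : (i < 3)%N) : (Smat (@Ss R) *m sigv (@Ssigma R)) (Ordinal hi) ord0 \in SG.
Proof. by rewrite mem_cat; apply/orP; left; apply: (map_f (fun i : 'I_3 => _)); rewrite mem_enum. Qed.

Lemma memSB i j (hi : (i < 3)%N) (hj : (j < 3)%N) :
  (\adj (Smat (@Ss R)) - (@St R) *: (sigv (@Ssigma R) *m (sigv (@Ssigma R))^T)) (Ordinal hi) (Ordinal hj) \in SG.
Proof.
rewrite mem_cat; apply/orP; right; apply/mapP; exists (Ordinal hi, Ordinal hj) => //.
by rewrite mem_enum.
Qed.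

Lemma memH1 i (hi : (i < 2)%N) : HE1 (@Hu R) (@Hx R) (@Hp R) (Ordinal hi) ord0 \in HG.
Proof. rewrite /H_gens mem_cat; apply/orP; left. apply/mapP; exists (Ordinal hi) => //. by rewrite mem_enum. Qed.
Lemma memH2 i (hi : (i < 2)%N) : HE2 (@Hu R) (@Hx R) (@Hp R) (Ordinal hi) ord0 \in HG.
Proof. rewrite /H_gens mem_cat; apply/orP; right; rewrite mem_cat; apply/orP; left. apply/mapP; exists (Ordinal hi) => //. by rewrite mem_enum. Qed.
Lemma memH3 i (hi : (i < 2)%N) : HE3 (@Hu R) (@Hx R) (@Hp R) (Ordinal hi) ord0 \in HG.
Proof. rewrite /H_gens mem_cat; apply/orP; right; rewrite mem_cat; apply/orP; right; rewrite mem_cat; apply/orP; left. apply/mapP; exists (Ordinal hi) => //. by rewrite mem_enum. Qed.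
Lemma memQ1 : Hu 2 * Hu 3 + \det (Dmat (@Hx R) (@Hp R) 1) \in HG.
Proof. rewrite /H_gens !mem_cat. apply/orP; right; apply/orP; right; apply/orP; right.
 by rewrite in_cons eqxx. Qed.
Lemma memQ2 : Hu 3 * Hu 1 + \det (Dmat (@Hx R) (@Hp R) 2) \in HG.
Proof. rewrite /H_gens !mem_cat. apply/orP; right; apply/orP; right; apply/orP; right.
 rewrite in_cons; apply/orP; right. by rewrite in_cons eqxx. Qed.
Lemma memQ3 : Hu 1 * Hu 2 + \det (Dmat (@Hx R) (@Hp R) 3) \in HG.
Proof. rewrite /H_gens !mem_cat. apply/orP; right; apply/orP; right; apply/orP; right.
 rewrite in_cons; apply/orP; right; rewrite in_cons; apply/orP; right. by rewrite mem_seq1 eqxx. Qed.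
End Main.

Ltac ev := rewrite /HE1 /HE2 /HE3 /Smat /sigv /xv /Dmat /St;
  do 3 (rewrite ?mxE /= ?(expand_det_row _ ord0); try rewrite /cofactor;
        rewrite ?big_ord_recl ?big_ord0 /= ?det_mx11 ?det_mx00 ?mxE /=);
  rewrite /Ssigma /Ss /Hx /Hu /Hp /bump /=.
Ltac fin := first [left; solve [ev; ring] | right; solve [ev; ring]].

Theorem proposition6p7 (R : comRingType) :
  same_ideal (H_gens (@Hu R) (@Hx R) (@Hp R)) (S_gens (@Ss R) (@Ssigma R) (@St R)).
Proof.
move=> p; split; apply: ideal_sub => q.
- rewrite {1}/H_gens !mem_cat => /orP[/mapP[i _ ->]|/orP[/mapP[i _ ->]|/orP[/mapP[i _ ->]|]]].
  + case: i => [[|[|//]] hi].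
    * apply: (mem_ideal_eq (memSB R 1 2 erefl erefl)); fin.
    * apply: (mem_ideal_eq (memSA R 0 erefl)); fin.
  + case: i => [[|[|//]] hi].
    * apply: (mem_ideal_eq (memSB R 0 2 erefl erefl)); fin.
    * apply: (mem_ideal_eq (memSA R 1 erefl)); fin.
  + case: i => [[|[|//]] hi].
    * apply: (mem_ideal_eq (memSB R 0 1 erefl erefl)); fin.
    * apply: (mem_ideal_eq (memSA R 2 erefl)); fin.
  + rewrite !inE => /orP[/eqP->|/orP[/eqP->|/eqP->]].
    * apply: (mem_ideal_eq (memSB R 0 0 erefl erefl)); fin.
    * apply: (mem_ideal_eq (memSB R 1 1 erefl erefl)); fin.
    * apply: (mem_ideal_eq (memSB R 2 2 erefl erefl)); fin.
- rewrite {1}/S_gens mem_cat => /orP[/mapP[i _ ->]|/mapP[[i j] _ ->]].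
  + case: i => [[|[|[|//]]] hi].
    * apply: (mem_ideal_eq (memH1 R 1 erefl)); fin.
    * apply: (mem_ideal_eq (memH2 R 1 erefl)); fin.
    * apply: (mem_ideal_eq (memH3 R 1 erefl)); fin.
  + case: i => [[|[|[|//]]] hi]; case: j => [[|[|[|//]]] hj].
    * apply: (mem_ideal_eq (memQ1 R)); fin.
    * apply: (mem_ideal_eq (memH3 R 0 erefl)); fin.
    * apply: (mem_ideal_eq (memH2 R 0 erefl)); fin.
    * apply: (mem_ideal_eq (memH3 R 0 erefl)); fin.
    * apply: (mem_ideal_eq (memQ2 R)); fin.
    * apply: (mem_ideal_eq (memH1 R 0 erefl)); fin.
    * apply: (mem_ideal_eq (memH2 R 0 erefl)); fin.
    * apply: (mem_ideal_eq (memH1 R 0 erefl)); fin.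
    * apply: (mem_ideal_eq (memQ3 R)); fin.
Qed.
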